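(* Let $C_0>0$. There exist $\delta>0$ and $C>0$ such that for every $n\in\mathbb Z\setminus\{0\}$ and every dyadic number $M\ge1$, the Lebesgue measure of the set $$\{\mu\in\mathbb R:\ M/2\le|\mu|\le2M,\ \exists\, n_1,n_2\in\mathbb Z\setminus\{0\}\text{ with } n_1+n_2=n \text{ and } |\mu+3nn_1n_2|\le C_0\langle nn_1n_2\rangle^{1/100}\}$$ is at most $CM^{1-\delta}$.
   Context: $\langle x\rangle=1+|x|$. A dyadic number is one of the form $2^j$, $j\in\mathbb Z_{\ge0}$. *)

(* Defs.v *)
From HB Require Import structures.
From mathcomp Require Import all_boot all_order all_algebra.
From mathcomp Require Import all_classical all_reals all_analysis.
Set Implicit Arguments. Unset Strict Implicit. Unset Printing Implicit Defensive.
Import Order.TTheory GRing.Theory Num.Theory.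
Local Open Scope classical_set_scope.
Local Open Scope ring_scope.

(* Japanese bracket <x> = 1 + |x| *)
Definition jbr {R : realType} (x : R) : R := 1 + `|x|.

Definition badset {R : realType} (C0 : R) (n : int) (M : R) : set R :=
  [set mu : R | M / 2 <= `|mu| <= 2 * M /\
     exists n1 n2 : int, [/\ n1 != 0, n2 != 0, n1 + n2 = n &
       `|mu + 3 * (n * n1 * n2)%:~R| <= C0 * jbr ((n * n1 * n2)%:~R) `^ (1 / 100)]].

(* Main.v *)
Require Import Defs.
From HB Require Import structures.
From mathcomp Require Import all_boot all_order all_algebra.
From mathcomp Require Import all_classical all_reals all_analysis.
From mathcomp Require Import measurable_realfun lra ring zify.
Import Order.TTheory GRing.Theory Num.Theory.
Local Open Scope classical_set_scope.
Local Open Scope ring_scope.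

Section Aux.
Variable R : realType.

Lemma powR_inv_exp (x : R) (k : nat) : 0 <= x -> (0 < k)%N ->
  (x `^ (1 / k%:R)) ^+ k = x.
Proof.
move=> x0 k0; rewrite -powR_mulrn ?powR_ge0 // -powRrM mul1r mulVf ?powRr1 //.
by rewrite pnatr_eq0 -lt0n.
Qed.

Lemma ge1_pow (y : R) (k : nat) : 0 <= y -> 1 <= y ^+ k.+1 -> 1 <= y.
Proof.
move=> y0 h; rewrite leNgt; apply/negP => y1.
by move: h; rewrite leNgt (exprn_ilt1 _ y0 y1).
Qed.

Lemma key (C0 M K mu : R) : 0 < C0 -> 1 <= M -> `|mu| <= 2 * M ->
  `|mu + 3 * K| <= C0 * jbr K `^ (1 / 100) -> jbr K <= (C0 ^+ 2 + 3) * M.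
Proof.
move=> C0p M1 hmu h.
set y := jbr K `^ (1 / 100); set x := jbr K.
have x1 : 1 <= x by rewrite /x /jbr lerDl.
have hy : y ^+ 100 = x.
  by rewrite /y -[100]/(100%:R) powR_inv_exp //; apply: le_trans x1.
have y0 : 0 <= y by exact: powR_ge0.
have y1 : 1 <= y by apply: (@ge1_pow _ 99) => //; rewrite hy.
have y2 : y ^+ 2 <= x.
  by rewrite -hy; apply: ler_weXn2l.
have hK : 3 * `|K| <= C0 * y + 2 * M.
  have -> : 3 * `|K| = `|(mu + 3 * K) + (- mu)|.
    by rewrite addrC addKr normrM gtr0_norm.
  by apply: (le_trans (ler_normD _ _)); rewrite normrN; apply: lerD.
have xK : x = 1 + `|K| by [].
clearbody x y.
case: (leP (C0 * y) x) => hc.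
  have : 0 <= C0 ^+ 2 * M by apply: mulr_ge0 => //; [exact: sqr_ge0|lra].
  lra.
have yC : y < C0.
  rewrite expr2 in y2.
  have : y * y < C0 * y by lra.
  by rewrite ltr_pM2r //; lra.
have : C0 * y <= C0 * C0 by rewrite ler_pM2l //; lra.
have : C0 * C0 <= C0 ^+ 2 * M.
  by rewrite -expr2 -{1}(mulr1 (C0 ^+ 2)) ler_pM2l // exprn_gt0.
lra.
Qed.

Lemma measIv (l r : R) : l <= r -> (lebesgue_measure [set` `[l, r]] <= (r - l)%:E)%E.
Proof.
move=> lr; rewrite lebesgue_measure_itv /=; case: ifP => [_|].
  by rewrite -EFinD.
by rewrite lte_fin => /negbT; rewrite -leNgt lee_fin; lra.
Qed.

End Aux.

Section Main.
Variables (R : realType) (C0 : R) (n : int) (M t : R).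
Hypotheses (nn0 : n != 0) (C0p : 0 < C0) (M1 : 1 <= M) (t1 : 1 <= t) (tM : t ^+ 4 = M).

Let E := C0 ^+ 2 + 3.
Let E1 : 1 <= E.
Proof. have := sqr_ge0 C0; rewrite /E; lra. Qed.

Let t0 : 0 < t. Proof. by apply: lt_le_trans t1. Qed.
Let E0 : 0 < E. Proof. by apply: lt_le_trans E1. Qed.

Let Kf (a : int) : R := (n * a * (n - a))%:~R.
Let rf (a : int) : R := C0 * jbr (Kf a) `^ (1 / 100).
Let Iv (a : int) : set R := [set` `[-3 * Kf a - rf a, -3 * Kf a + rf a]].

Lemma memIv a mu : (`|mu + 3 * Kf a| <= rf a) <-> Iv a mu.
Proof.
rewrite /Iv /= in_itv /= ler_norml; split => /andP[h1 h2]; apply/andP; split; lra.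
Qed.

Lemma key_r a mu : `|mu| <= 2 * M -> `|mu + 3 * Kf a| <= rf a ->
  rf a <= C0 * E * t /\ jbr (Kf a) <= E * M.
Proof.
move=> hmu h; have hx := @key R C0 M (Kf a) mu C0p M1 hmu h.
split => //.
rewrite /rf -mulrA ler_pM2l //.
set y := jbr (Kf a) `^ (1 / 100).
have x1 : 1 <= jbr (Kf a) by rewrite /jbr lerDl.
have hy : y ^+ 100 = jbr (Kf a).
  by rewrite /y -[100]/(100%:R) powR_inv_exp //; apply: le_trans x1.
have y0 : 0 <= y by exact: powR_ge0.
have y1 : 1 <= y by apply: (@ge1_pow _ _ 99) => //; rewrite hy.
have y4 : y ^+ 4 <= (E * t) ^+ 4.
  apply: (le_trans (ler_weXn2l y1 (isT : (4 <= 100)%N))); rewrite hy.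
  apply: (le_trans hx); rewrite exprMn -tM ler_pM2r ?exprn_gt0 //.
  by rewrite /E; apply: ler_eXnr.
move: y4; rewrite ler_pXn2r // nnegrE //.
by apply: mulr_ge0; apply: ltW.
Qed.

Let N := Num.Def.trunc (E * t ^+ 2).

Lemma sq_bound w : 0 <= w -> w ^+ 2 <= E * t ^+ 4 -> w <= E * t ^+ 2.
Proof.
move=> w0 hw.
have : w ^+ 2 <= (E * t ^+ 2) ^+ 2.
  apply: (le_trans hw); rewrite exprMn -exprM ler_pM2r ?exprn_gt0 //.
  exact: ler_eXnr.
rewrite ler_pXn2r // nnegrE; apply: mulr_ge0; apply: ltW => //.
exact: exprn_gt0.
Qed.

Lemma toN (a : int) : `|a%:~R : R| <= E * t ^+ 2 -> (`|a|%N <= N)%N.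
Proof.
move=> h; rewrite /N truncn_ge_nat; last first.
  by apply: mulr_ge0; apply: ltW => //; exact: exprn_gt0.
by rewrite natr_absz intr_norm.
Qed.

Lemma idx a mu : `|mu| <= 2 * M -> `|mu + 3 * Kf a| <= rf a ->
  (`|a|%N <= N)%N \/ (`|(n - a)%R|%N <= N)%N.
Proof.
move=> hmu h; have [_ hx] := key_r a mu hmu h.
set u := `|a%:~R : R|; set v := `|(n - a)%:~R : R|.
have n1 : 1 <= `|n%:~R : R|.
  rewrite -intr_norm ler1z; lia.
have u0 : 0 <= u by exact: normr_ge0.
have v0 : 0 <= v by exact: normr_ge0.
have uv : u * v <= E * t ^+ 4.
  have hK : `|Kf a| = `|n%:~R : R| * u * v by rewrite /Kf !intrM !normrM.
  rewrite tM; apply: le_trans hx; rewrite /jbr hK -mulrA.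
  have : u * v <= `|n%:~R : R| * (u * v) by apply: ler_peMl => //; exact: mulr_ge0.
  lra.
case: (leP u v) => uv'.
  left; apply: toN; apply: sq_bound => //; apply: le_trans uv.
  by rewrite expr2 ler_wpM2l.
right; apply: toN; apply: sq_bound => //; apply: le_trans uv.
by rewrite expr2 ler_wpM2r // ltW.
Qed.

Let Fa (a : int) : set R := if rf a <= C0 * E * t then Iv a else set0.

Let rf0 a : 0 <= rf a.
Proof. by apply: mulr_ge0; [exact: ltW | exact: powR_ge0]. Qed.

Lemma Fa_meas a : measurable (Fa a).
Proof. by rewrite /Fa; case: ifP => _; [exact: measurable_itv | exact: measurable0]. Qed.

Lemma Fa_le a : (lebesgue_measure (Fa a) <= (2 * (C0 * E * t))%:E)%E.
Proof.
have c0 : 0 <= C0 * E * t by apply: mulr_ge0; [apply: mulr_ge0|]; apply: ltW.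
have := rf0 a.
rewrite /Fa; case: ifP => hr r0.
  apply: le_trans (@measIv R _ _ _) _; first lra.
  rewrite lee_fin; lra.
rewrite measure0 lee_fin; lra.
Qed.

Let G (k : nat) : set R := Fa (k%:Z - N%:Z) `|` Fa (n - (k%:Z - N%:Z)).

Lemma G_meas k : measurable (G k).
Proof. by apply: measurableU; apply: Fa_meas. Qed.

Lemma G_le k : (lebesgue_measure (G k) <= (4 * (C0 * E * t))%:E)%E.
Proof.
apply: le_trans (measureU2 lebesgue_measure (Fa_meas _) (Fa_meas _)) _.
apply: le_trans (leeD (Fa_le _) (Fa_le _)) _.
rewrite -EFinD lee_fin; lra.
Qed.

Lemma cover : badset C0 n M `<=` \big[setU/set0]_(k < (2 * N).+1) G k.
Proof.
move=> mu [/andP[_ hmu] [n1 [n2 [_ _ hn h]]]].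
have e : n2 = n - n1 by rewrite -hn addrC addKr.
subst n2.
have h' : `|mu + 3 * Kf n1| <= rf n1 := h.
have [hr _] := key_r n1 mu hmu h'.
have hF : Fa n1 mu by rewrite /Fa hr; apply/memIv.
rewrite -bigcup_mkord.
case: (idx n1 mu hmu h') => hi.
  exists `|(n1 + N%:Z)%R|%N; first by rewrite /=; lia.
  by left; rewrite (_ : _ - _ = n1) //; lia.
exists `|(n - n1 + N%:Z)%R|%N; first by rewrite /=; lia.
by right; rewrite (_ : n - (_ - _) = n1) //; lia.
Qed.

Let H (a : int) : set R := if (a != 0) && (n - a != 0) then Iv a else set0.

Lemma badset_eq : badset C0 n M =
  ((fun x : R => `|x|) @^-1` [set` `[M / 2, 2 * M]]) `&` \bigcup_k (H k%:Z `|` H (- k%:Z)).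
Proof.
apply/seteqP; split => mu.
  move=> [hA [n1 [n2 [h1 h2 hn h]]]].
  have e : n2 = n - n1 by rewrite -hn addrC addKr.
  subst n2.
  have h' : `|mu + 3 * Kf n1| <= rf n1 := h.
  have hH : H n1 mu by rewrite /H h1 h2; apply/memIv.
  split; first by rewrite /= in_itv.
  exists `|n1|%N => //.
  have [e|e] : n1 = `|n1|%N \/ n1 = - (`|n1|%N)%:Z by lia.
    by left; rewrite -e.
  by right; rewrite -e.
move=> [hA [k _ hk]].
have : exists a, H a mu by case: hk => hk; eexists; exact: hk.
move=> [a]; rewrite /H; case: ifP => // /andP[h1 h2] /memIv h.
split; first by move: hA; rewrite /= in_itv.
by exists a, (n - a); split => //; rewrite addrC subrK.
Qed.

Lemma badset_meas : measurable (badset C0 n M).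
Proof.
rewrite badset_eq; apply: measurableI.
  rewrite -[X in measurable X]setTI; apply: normr_measurable => //.
apply: bigcupT_measurable => k; apply: measurableU;
  rewrite /H; case: ifP => _; (exact: measurable_itv || exact: measurable0).
Qed.

Lemma bound : (lebesgue_measure (badset C0 n M) <=
  ((4 * (C0 * E * t)) *+ (2 * N).+1)%:E)%E.
Proof.
apply: le_trans (@content_subadditive _ _ _ lebesgue_measure (badset C0 n M) G
   (2 * N).+1 (fun k _ => G_meas k) badset_meas cover) _.
have -> : (4 * (C0 * E * t) *+ (2 * N).+1)%:E =
   \sum_(k < (2 * N).+1) (4 * (C0 * E * t))%:E.
  by rewrite sumEFin sumr_const card_ord.
by apply: lee_sum => k _; exact: G_le.
Qed.

End Main.

Theorem lemmaA1 (R : realType) (C0 : R) (hC0 : 0 < C0) :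
  exists delta C : R, [/\ 0 < delta, 0 < C &
    forall (n : int) (j : nat), n != 0 ->
      let M : R := 2 ^+ j in
      measurable (badset C0 n M) /\
      (lebesgue_measure (badset C0 n M) <= (C * M `^ (1 - delta))%:E)%E].
Proof.
set E := C0 ^+ 2 + 3.
have E1 : 1 <= E by have := sqr_ge0 C0; rewrite /E; lra.
exists (1 / 4), (20 * C0 * E ^+ 2); split => //.
  by apply: mulr_gt0; [apply: mulr_gt0 => //; lra | apply: exprn_gt0; lra].
move=> n j nn0 M.
have M1 : 1 <= M by rewrite /M; apply: exprn_ege1; lra.
set t := M `^ (1 / 4).
have tM : t ^+ 4 = M.
  by rewrite /t -[4]/(4%:R) powR_inv_exp //; apply: le_trans M1.
have t0 : 0 <= t by exact: powR_ge0.
have t1 : 1 <= t by apply: (@ge1_pow _ _ 3) => //; rewrite tM.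
split; first exact: (@badset_meas R C0 n M t).
apply: le_trans (@bound R C0 n M t nn0 hC0 M1 t1 tM) _.
have -> : M `^ (1 - 1 / 4) = t ^+ 3.
  rewrite (_ : 1 - 1 / 4 = 1 / 4 * 3%:R); last by field.
  by rewrite powRrM powR_mulrn.
rewrite lee_fin -/E -mulr_natr.
set N := Num.Def.trunc _.
have hN : N%:R <= E * t ^+ 2.
  rewrite /N truncn_le; apply: mulr_ge0; [lra | exact: exprn_ge0].
have t2 : 1 <= t ^+ 2 by exact: exprn_ege1.
have Et : 1 <= E * t ^+ 2 by rewrite -[1]mul1r; apply: ler_pM.
have hX : ((2 * N).+1)%:R <= 3 * (E * t ^+ 2) :> R.
  rewrite -addn1 natrD natrM; lra.
have c0 : 0 <= 4 * (C0 * E * t).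
  apply: mulr_ge0; first lra.
  apply: mulr_ge0 => //; apply: mulr_ge0; lra.
apply: le_trans (ler_wpM2l c0 hX) _.
have -> : 4 * (C0 * E * t) * (3 * (E * t ^+ 2)) = 12 * (C0 * E ^+ 2 * t ^+ 3) by ring.
have -> : 20 * C0 * E ^+ 2 * t ^+ 3 = 20 * (C0 * E ^+ 2 * t ^+ 3) by ring.
have : 0 <= C0 * E ^+ 2 * t ^+ 3.
  apply: mulr_ge0; [apply: mulr_ge0; [lra | apply: exprn_ge0; lra] | exact: exprn_ge0].
lra.
Qed.
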